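(* Let $A, B$ be weak bialgebras over a field $\boldsymbol{k}$, and let $F=(F,\bar\phi^F,\bar\omega^F):\mathbb{M}^A\to\mathbb{M}^B$ be a strong $\boldsymbol{k}$-linear comonoidal functor, with $\bar\phi^F_{M,N}:F(M\otimes_{A_s}N)\to F(M)\otimes_{B_s}F(N)$ and $\bar\omega^F:F(A_s)\to B_s$, such that $U^B\circ F=U^A$ as monoidal functors (i.e. $F(M)$ has the same underlying vector space as $M$, $F(f)=f$, $U^B((\bar\phi^F_{M,N})^{-1})\circ\phi^{U^B}_{F(M),F(N)}=\phi^{U^A}_{M,N}$ and $U^B((\bar\omega^F)^{-1})\circ\omega^{U^B}=\omega^{U^A}$). If $F$ is a $\boldsymbol{k}$-linear monoidal equivalence, then the unique weak bialgebra map $\varphi:A\to B$ with $F=\mathbb{M}^{\varphi}$ as comonoidal functors is an isomorphism of weak bialgebras.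
   Context: A weak bialgebra over $\boldsymbol{k}$ is a vector space $H$ with an algebra structure (unit $1$) and a coalgebra structure $(\Delta,\varepsilon)$ (Sweedler notation) such that $\Delta(xy)=\Delta(x)\Delta(y)$; $(\Delta\otimes\mathrm{id})\Delta(1)=(\Delta(1)\otimes1)(1\otimes\Delta(1))=(1\otimes\Delta(1))(\Delta(1)\otimes1)$; and $\varepsilon(xyz)=\varepsilon(xy_{(1)})\varepsilon(y_{(2)}z)=\varepsilon(xy_{(2)})\varepsilon(y_{(1)}z)$. A weak bialgebra map is a unital algebra map that is a coalgebra map. $\varepsilon_s(x)=1_{(1)}\varepsilon(x1_{(2)})$, $H_s=\varepsilon_s(H)$. A right $H$-comodule $M$ ($\rho(m)=m_{(0)}\otimes m_{(1)}$) is an $(H_s,H_s)$-bimodule via $y\cdot m=m_{(0)}\varepsilon(ym_{(1)})$, $m\cdot y=m_{(0)}\varepsilon(m_{(1)}y)$. $\mathbb{M}^H$ is the monoidal category of finite-dimensional right $H$-comodules with tensor product $M\otimes_{H_s}N$ (coaction $m\otimes n\mapsto m_{(0)}\otimes n_{(0)}\otimes m_{(1)}n_{(1)}$) and unit $(H_s,\Delta|_{H_s})$. $U^H:\mathbb{M}^H\to\mathrm{Vect}^{\mathrm{f.d.}}_{\boldsymbol{k}}$ is the forgetful functor, (lax) monoidal with $\phi^{U^H}_{M,N}:M\otimes N\to M\otimes_{H_s}N$ the canonical projection and $\omega^{U^H}:\boldsymbol{k}\to H_s$, $1\mapsto1$. For a weak bialgebra map $\varphi$, $\mathbb{M}^\varphi(M,\rho)=(M,(\mathrm{id}\otimes\varphi)\rho)$,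 $\mathbb{M}^\varphi(f)=f$, with comonoidal structure maps $M\otimes_{A_s}N\to M\otimes_{B_s}N$ induced by the identity and $\varphi|_{A_s}$. A comonoidal functor has natural maps $F(M\otimes N)\to F(M)\otimes F(N)$ and $F(I)\to I'$ satisfying the duals of the monoidal functor axioms; strong means they are isomorphisms. *)

(* Defs.v *)
From HB Require Import structures.
From mathcomp Require Import all_boot all_order all_algebra.
From Stdlib Require Import ClassicalEpsilon.

Set Implicit Arguments.
Unset Strict Implicit.
Unset Printing Implicit Defensive.

Import GRing.Theory.
Local Open Scope ring_scope.

Section WeakBialgebras.
Variable K : fieldType.

(* An element of U (x) V is represented by a finite list of pairs           *)
(* [(u_1,v_1); ...; (u_n,v_n)], standing for  sum_i u_i (x) v_i.            *)
(* Two such representatives are equal in U (x) V iff every linear           *)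
(* functional on U (x) V, i.e. every bilinear form U x V -> K, agrees on    *)
(* them (the dual of U (x) V is Bil(U,V;K), and it separates points).       *)
Definition tens2 (U V : lmodType K) := seq (U * V).
Definition tens3 (U V W : lmodType K) := seq (U * V * W).

Definition bilinear_form (U V : lmodType K) (b : U -> V -> K) : Prop :=
  (forall (a : K) u1 u2 v, b (a *: u1 + u2) v = a * b u1 v + b u2 v) /\
  (forall (a : K) u v1 v2, b u (a *: v1 + v2) = a * b u v1 + b u v2).

Definition trilinear_form (U V W : lmodType K) (t : U -> V -> W -> K) : Prop :=
  [/\ (forall (a : K) u1 u2 v w, t (a *: u1 + u2) v w = a * t u1 v w + t u2 v w),
      (forall (a : K) u v1 v2 w, t u (a *: v1 + v2) w = a * t u v1 w + t u v2 w) &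
      (forall (a : K) u v w1 w2, t u v (a *: w1 + w2) = a * t u v w1 + t u v w2)].

Definition teq2 (U V : lmodType K) (s t : tens2 U V) : Prop :=
  forall b : U -> V -> K, bilinear_form b ->
    \sum_(p <- s) b p.1 p.2 = \sum_(p <- t) b p.1 p.2.

Definition teq3 (U V W : lmodType K) (s t : tens3 U V W) : Prop :=
  forall b : U -> V -> W -> K, trilinear_form b ->
    \sum_(p <- s) b p.1.1 p.1.2 p.2 = \sum_(p <- t) b p.1.1 p.1.2 p.2.

Record wbdata := WBData {
  wb_car :> lmodType K;
  wb_mul : wb_car -> wb_car -> wb_car;
  wb_one : wb_car;
  wb_cm  : wb_car -> tens2 wb_car wb_car;
  wb_eps : wb_car -> K }.

Record is_wba (H : wbdata) : Prop := IsWBA {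
  wba_mulA : forall x y z : H,
    wb_mul x (wb_mul y z) = wb_mul (wb_mul x y) z;
  wba_mul1l : forall x : H, wb_mul (wb_one H) x = x;
  wba_mul1r : forall x : H, wb_mul x (wb_one H) = x;
  wba_mul_linl : forall (a : K) (x1 x2 y : H),
    wb_mul (a *: x1 + x2) y = a *: wb_mul x1 y + wb_mul x2 y;
  wba_mul_linr : forall (a : K) (x y1 y2 : H),
    wb_mul x (a *: y1 + y2) = a *: wb_mul x y1 + wb_mul x y2;
  wba_cm_lin : forall (a : K) (x y : H),
    teq2 (wb_cm (a *: x + y))
         ([seq (a *: p.1, p.2) | p <- wb_cm x] ++ wb_cm y);
  wba_eps_lin : forall (a : K) (x y : H),
    wb_eps (a *: x + y) = a * wb_eps x + wb_eps y;
  wba_coassoc : forall x : H,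
    teq3 [seq (q.1, q.2, p.2) | p <- wb_cm x, q <- wb_cm p.1]
         [seq (p.1, q.1, q.2) | p <- wb_cm x, q <- wb_cm p.2];
  wba_counitl : forall x : H, \sum_(p <- wb_cm x) wb_eps p.1 *: p.2 = x;
  wba_counitr : forall x : H, \sum_(p <- wb_cm x) wb_eps p.2 *: p.1 = x;
  wba_cmM : forall x y : H,
    teq2 (wb_cm (wb_mul x y))
         [seq (wb_mul p.1 q.1, wb_mul p.2 q.2) | p <- wb_cm x, q <- wb_cm y];
  (* (Delta (x) id) Delta(1) = (Delta(1) (x) 1)(1 (x) Delta(1)) *)
  wba_unit1 :
    teq3 [seq (q.1, q.2, p.2) | p <- wb_cm (wb_one H), q <- wb_cm p.1]
         [seq (p.1, wb_mul p.2 q.1, q.2) | p <- wb_cm (wb_one H), q <- wb_cm (wb_one H)];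
  (* (Delta (x) id) Delta(1) = (1 (x) Delta(1))(Delta(1) (x) 1) *)
  wba_unit2 :
    teq3 [seq (q.1, q.2, p.2) | p <- wb_cm (wb_one H), q <- wb_cm p.1]
         [seq (p.1, wb_mul q.1 p.2, q.2) | p <- wb_cm (wb_one H), q <- wb_cm (wb_one H)];
  wba_counit1 : forall x y z : H,
    wb_eps (wb_mul (wb_mul x y) z)
    = \sum_(p <- wb_cm y) wb_eps (wb_mul x p.1) * wb_eps (wb_mul p.2 z);
  wba_counit2 : forall x y z : H,
    wb_eps (wb_mul (wb_mul x y) z)
    = \sum_(p <- wb_cm y) wb_eps (wb_mul x p.2) * wb_eps (wb_mul p.1 z) }.

Record is_wbamap (A B : wbdata) (f : A -> B) : Prop := IsWBAMap {
  wbm_lin : forall (a : K) (x y : A), f (a *: x + y) = a *: f x + f y;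
  wbm_mul : forall x y : A, f (wb_mul x y) = wb_mul (f x) (f y);
  wbm_one : f (wb_one A) = wb_one B;
  wbm_cm  : forall x : A,
    teq2 (wb_cm (f x)) [seq (f p.1, f p.2) | p <- wb_cm x];
  wbm_eps : forall x : A, wb_eps (f x) = wb_eps x }.

Definition is_wba_iso (A B : wbdata) (f : A -> B) : Prop :=
  is_wbamap f /\
  exists g : B -> A, [/\ is_wbamap g, cancel f g & cancel g f].

Definition eps_s (H : wbdata) (x : H) : H :=
  \sum_(p <- wb_cm (wb_one H)) wb_eps (wb_mul x p.2) *: p.1.

Definition in_Hs (H : wbdata) (y : H) : Prop := exists x : H, y = eps_s x.

Record preco (H : wbdata) := PreCo {
  pc_car :> vectType K;
  pc_co : pc_car -> tens2 pc_car H }.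
Arguments pc_co {H} p _.

Record is_comod (H : wbdata) (X : preco H) : Prop := IsComod {
  co_lin : forall (a : K) (x y : X),
    teq2 (pc_co X (a *: x + y))
         ([seq (a *: p.1, p.2) | p <- pc_co X x] ++ pc_co X y);
  co_coassoc : forall x : X,
    teq3 [seq (q.1, q.2, p.2) | p <- pc_co X x, q <- pc_co X p.1]
         [seq (p.1, q.1, q.2) | p <- pc_co X x, q <- wb_cm p.2];
  co_counit : forall x : X, \sum_(p <- pc_co X x) wb_eps p.2 *: p.1 = x }.

Definition is_cmap (H : wbdata) (X Y : preco H) (f : 'Hom(X, Y)) : Prop :=
  forall x : X, teq2 (pc_co Y (f x)) [seq (f p.1, p.2) | p <- pc_co X x].

(* the (H_s,H_s)-bimodule structure:  y . m  and  m . y *)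
Definition act_l (H : wbdata) (X : preco H) (y : H) (m : X) : X :=
  \sum_(p <- pc_co X m) wb_eps (wb_mul y p.2) *: p.1.
Definition act_r (H : wbdata) (X : preco H) (m : X) (y : H) : X :=
  \sum_(p <- pc_co X m) wb_eps (wb_mul p.2 y) *: p.1.
Arguments act_l {H} X y m.
Arguments act_r {H} X m y.

(* Tensor product over k of finite-dimensional spaces, in coordinates:       *)
(* M (x) N = 'M_(dim M, dim N), m (x) n = outer product of coordinates.      *)
Definition mxtens (X Y : vectType K) (x : X) (y : Y)
  : 'M[K]_(\dim {:X}, \dim {:Y}) :=
  \matrix_(i, j) (coord (vbasis {:X}) i x * coord (vbasis {:Y}) j y).

Definition tensf (X X' Y Y' : vectType K) (f : 'Hom(X, X')) (g : 'Hom(Y, Y'))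
  (v : 'M[K]_(\dim {:X}, \dim {:Y})) : 'M[K]_(\dim {:X'}, \dim {:Y'}) :=
  \sum_i \sum_j v i j *: mxtens (f (tnth (vbasis {:X}) i)) (g (tnth (vbasis {:Y}) j)).

(* coaction on M (x) N:  m (x) n |-> m_(0) (x) n_(0) (x) m_(1) n_(1) *)
Definition mcoact (H : wbdata) (X Y : preco H)
  (v : 'M[K]_(\dim {:X}, \dim {:Y})) : tens2 'M[K]_(\dim {:X}, \dim {:Y}) H :=
  flatten [seq [seq (v i j *: mxtens p.1 q.1, wb_mul p.2 q.2)
               | p <- pc_co X (tnth (vbasis {:X}) i),
                 q <- pc_co Y (tnth (vbasis {:Y}) j)]
          | i <- enum 'I_(\dim {:X}), j <- enum 'I_(\dim {:Y})].

Arguments mcoact {H} X Y v.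

(* the generators (m . y) (x) n - m (x) (y . n), y in H_s, of the kernel of  *)
(* M (x) N -> M (x)_{H_s} N                                                  *)
Definition brel (H : wbdata) (X Y : preco H)
  (v : 'M[K]_(\dim {:X}, \dim {:Y})) : Prop :=
  exists y : H, in_Hs y /\
  exists (m : X) (n : Y), v = mxtens (act_r X m y) n - mxtens m (act_l Y y n).

Definition in_span (V : lmodType K) (P : V -> Prop) (v : V) : Prop :=
  exists n (c : 'I_n -> K) (w : 'I_n -> V),
    (forall i, P (w i)) /\ v = \sum_i c i *: w i.

(* The tensor product object M (x)_{H_s} N of M^H: a comodule T together     *)
(* with the canonical projection pi : M (x) N -> T (surjective, with kernel  *)
(* the span of the balancing relations, and a comodule map for the coaction *)
(* of M (x) N).  Such a quotient is unique up to unique isomorphism; we fix  *)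
(* one by choice.                                                            *)
Record btens (H : wbdata) (X Y : preco H) := BTens {
  bt_obj : preco H;
  bt_proj : 'Hom('M[K]_(\dim {:X}, \dim {:Y}), bt_obj) }.
Arguments bt_obj {H X Y} b.
Arguments bt_proj {H X Y} b.

Definition is_btens (H : wbdata) (X Y : preco H) (T : btens X Y) : Prop :=
  [/\ (forall t : bt_obj T, exists v, bt_proj T v = t),
      (forall v, bt_proj T v = 0 <-> in_span (@brel H X Y) v) &
      (forall v, teq2 (pc_co (bt_obj T) (bt_proj T v))
                      [seq (bt_proj T p.1, p.2) | p <- mcoact X Y v])].

Definition btens_default (H : wbdata) (X Y : preco H) : btens X Y :=
  @BTens H X Y (@PreCo H 'M[K]_(\dim {:X}, \dim {:Y}) (fun _ => [::])) \1%VF.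

Definition btensor (H : wbdata) (X Y : preco H) : btens X Y :=
  epsilon (inhabits (btens_default X Y)) (@is_btens H X Y).

(* M (x)_{H_s} N as an object, and phi^{U^H}_{M,N} : M (x) N -> M (x)_{H_s} N *)
Definition bobj (H : wbdata) (X Y : preco H) : preco H := bt_obj (btensor X Y).
Definition bproj (H : wbdata) (X Y : preco H)
  : 'Hom('M[K]_(\dim {:X}, \dim {:Y}), bobj X Y) := bt_proj (btensor X Y).

(* The unit object (H_s, Delta|_{H_s}): a comodule U with a linear injection *)
(* inc : U -> H with image H_s, intertwining the coaction of U with Delta.   *)
(* Fixed by choice.                                                          *)
Record unitr (H : wbdata) := UnitR {
  u_obj : preco H;
  u_inc : u_obj -> H }.
Arguments u_inc {H} u _.

Definition is_unitr (H : wbdata) (U : unitr H) : Prop :=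
  [/\ (forall (a : K) (x y : u_obj U),
         u_inc U (a *: x + y) = a *: u_inc U x + u_inc U y),
      injective (u_inc U),
      (forall y : H, in_Hs y <-> exists w, u_inc U w = y) &
      (forall w, teq2 [seq (u_inc U p.1, p.2) | p <- pc_co (u_obj U) w]
                      (wb_cm (u_inc U w)))].

Definition unitr_default (H : wbdata) : unitr H :=
  @UnitR H (@PreCo H 'rV[K]_0 (fun _ => [::])) (fun _ => 0).

Definition unitobj (H : wbdata) : unitr H :=
  epsilon (inhabits (unitr_default H)) (@is_unitr H).

(* Functors F : M^A -> M^B with U^B o F = U^A: F(M) has the same underlying  *)
(* space as M and F(f) = f.  Such an F is given by its action on coactions.  *)
Definition Fobj (A B : wbdata) (Fco : forall X : preco A, X -> tens2 X B)
  (X : preco A) : preco B := @PreCo B (pc_car X) (Fco X).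

Record strong_comonoidal_over_forget (A B : wbdata)
  (Fco : forall X : preco A, X -> tens2 X B)
  (phiF : forall X Y : preco A,
     'Hom(Fobj Fco (bobj X Y), bobj (Fobj Fco X) (Fobj Fco Y)))
  (omF : 'Hom(Fobj Fco (u_obj (unitobj A)), u_obj (unitobj B))) : Prop :=
 SCOF {
  F_obj : forall X : preco A, is_comod X -> is_comod (Fobj Fco X);
  F_mor : forall (X Y : preco A) (f : 'Hom(X, Y)),
    is_comod X -> is_comod Y -> is_cmap f ->
    @is_cmap B (Fobj Fco X) (Fobj Fco Y) f;
  phi_cmap : forall X Y : preco A, is_comod X -> is_comod Y ->
    is_cmap (phiF X Y);
  phi_natural : forall (X X' Y Y' : preco A) (f : 'Hom(X, X')) (g : 'Hom(Y, Y')),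
    is_comod X -> is_comod X' -> is_comod Y -> is_comod Y' ->
    is_cmap f -> is_cmap g ->
    forall v u,
      phiF X Y (bproj X Y v) = bproj (Fobj Fco X) (Fobj Fco Y) u ->
      phiF X' Y' (bproj X' Y' (tensf f g v))
      = bproj (Fobj Fco X') (Fobj Fco Y') (tensf f g u);
  om_cmap : is_cmap omF;
  phi_bij : forall X Y : preco A, is_comod X -> is_comod Y ->
    bijective (phiF X Y);
  om_bij : bijective omF;
  phi_forget : forall X Y : preco A, is_comod X -> is_comod Y ->
    forall v, (phiF X Y)^-1%VF (bproj (Fobj Fco X) (Fobj Fco Y) v) = bproj X Y v;
  (* U^B(omegabar^{-1}) o omega^{U^B} = omega^{U^A}  (1 |-> 1) *)
  om_forget : forall w : u_obj (unitobj B),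
    u_inc (unitobj B) w = wb_one B ->
    u_inc (unitobj A) ((omF^-1)%VF w) = wb_one A }.

(* F is an equivalence of categories M^A -> M^B (it is faithful since        *)
(* F(f) = f; we require it full and essentially surjective).                *)
Definition is_equivalence (A B : wbdata)
  (Fco : forall X : preco A, X -> tens2 X B) : Prop :=
  (forall (X Y : preco A) (f : 'Hom(X, Y)),
     is_comod X -> is_comod Y ->
     @is_cmap B (Fobj Fco X) (Fobj Fco Y) f -> is_cmap f) /\
  (forall Z : preco B, is_comod Z ->
     exists X : preco A, is_comod X /\
     exists (f : 'Hom(Fobj Fco X, Z)) (g : 'Hom(Z, Fobj Fco X)),
       [/\ is_cmap f, is_cmap g, cancel f g & cancel g f]).

(* F = M^phi as comonoidal functors: same coactions (id (x) phi) rho, same   *)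
(* morphisms (automatic), phibar induced by the identity of M (x) N, and     *)
(* omegabar = phi restricted to A_s.                                         *)
Definition eq_Mphi (A B : wbdata)
  (Fco : forall X : preco A, X -> tens2 X B)
  (phiF : forall X Y : preco A,
     'Hom(Fobj Fco (bobj X Y), bobj (Fobj Fco X) (Fobj Fco Y)))
  (omF : 'Hom(Fobj Fco (u_obj (unitobj A)), u_obj (unitobj B)))
  (phi : A -> B) : Prop :=
  [/\ (forall X : preco A, is_comod X ->
         forall x : X, teq2 (Fco X x) [seq (p.1, phi p.2) | p <- pc_co X x]),
      (forall X Y : preco A, is_comod X -> is_comod Y ->
         forall v, phiF X Y (bproj X Y v) = bproj (Fobj Fco X) (Fobj Fco Y) v) &
      (forall w, u_inc (unitobj B) (omF w) = phi (u_inc (unitobj A) w))].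

End WeakBialgebras.

(* Main.v *)
From HB Require Import structures.
From mathcomp Require Import all_boot all_order all_algebra.
From Stdlib Require Import ClassicalEpsilon.
Require Import Defs.
From mathcomp Require classical_sets boolp.
Set Implicit Arguments.
Unset Strict Implicit.
Unset Printing Implicit Defensive.
Import GRing.Theory.
Local Open Scope ring_scope.

Module ZornW.
Import classical_sets boolp.
Local Open Scope classical_set_scope.
Lemma my_zorn (T : Type) (P : (T -> Prop) -> Prop) :
  (forall F : (T -> Prop) -> Prop, (forall X, F X -> P X) ->
     (forall X Y, F X -> F Y -> (forall t, X t -> Y t) \/ (forall t, Y t -> X t)) ->
     P (fun t => exists X, F X /\ X t)) ->
  exists A, P A /\ forall B, (forall t, A t -> B t) -> (exists t, B t /\ ~ A t) -> ~ P B.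
Proof.
move=> H.
have : exists A, P A /\ forall B, A `<` B -> ~ P B.
  apply: Zorn_bigcup => F FP Ftot.
  have -> : (\bigcup_(X in F) X) = (fun t => exists X, F X /\ X t).
    apply/funext=> t; apply/propext; split; first by case=> X FX Xt; exists X.
    by case=> X [FX Xt]; exists X.
  apply: H; first by [].
  move=> X Y FX FY; case: (Ftot X Y FX FY) => s; [left|right] => t; exact: s.
case=> A [PA Amax].
exists A; split => // B AB [t [Bt nAt]] PB; apply: (Amax B) => //.
split; first by move=> x; apply: AB.
by move=> BA; apply: nAt; apply: BA.
Qed.
End ZornW.

Section Lin.
Variable K : fieldType.

Definition lin (V : lmodType K) (f : V -> K) :=
  forall (a : K) x y, f (a *: x + y) = a * f x + f y.
Definition linm (V W : lmodType K) (f : V -> W) :=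
  forall (a : K) x y, f (a *: x + y) = a *: f x + f y.

Lemma lin0 (V : lmodType K) (f : V -> K) : lin f -> f 0 = 0.
Proof.
move=> lf; have := lf 1 0 0; rewrite scale1r addr0 mul1r => h.
by apply: (@addIr _ (f 0)); rewrite add0r -h.
Qed.

Lemma linm0 (V W : lmodType K) (f : V -> W) : linm f -> f 0 = 0.
Proof.
move=> lf; have := lf 1 0 0; rewrite scale1r addr0 scale1r => h.
by apply: (@addIr _ (f 0)); rewrite add0r -h.
Qed.

Lemma ext_fun (V' V : lmodType K) (L : V' -> V) (g : V' -> K) :
  linm L -> lin g -> (forall w, L w = 0 -> g w = 0) ->
  exists f, lin f /\ forall w, f (L w) = g w.
Proof.
move=> lL lg kerLg.
pose good (G : V * K -> Prop) :=
  [/\ forall w, G (L w, g w),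
      forall v a b, G (v, a) -> G (v, b) -> a = b &
      forall c v w a b, G (v, a) -> G (w, b) -> G (c *: v + w, c * a + b)].
pose P G := (forall t, ~ G t) \/ good G.
have [A [PA Amax]] : exists A, P A /\ forall B, (forall t, A t -> B t) ->
    (exists t, B t /\ ~ A t) -> ~ P B.
  apply: ZornW.my_zorn => F FP Ftot.
  have [ne|e] := classic (exists X, F X /\ exists t, X t); last first.
    apply: or_introl => t [X [FX Xt]]; apply: e; exists X; split => //; by exists t.
  apply: or_intror; case: ne => X0 [FX0 [t0 X0t0]].
  have goodF X : F X -> (exists t, X t) -> good X.
    move=> FX [t Xt]; case: (FP X FX) => // /(_ t); done.
  have gX0 : good X0 by apply: goodF => //; exists t0.
  split.
  - by move=> w; exists X0; split => //; case: gX0.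
  - move=> v a b [X [FX Xa]] [Y [FY Yb]].
    case: (Ftot X Y FX FY) => sub.
      by case: (goodF Y FY (ex_intro _ _ Yb)) => _ fY _; apply: fY (sub _ Xa) Yb.
    by case: (goodF X FX (ex_intro _ _ Xa)) => _ fX _; apply: fX Xa (sub _ Yb).
  - move=> c v w a b [X [FX Xa]] [Y [FY Yb]].
    case: (Ftot X Y FX FY) => sub.
      exists Y; split => //.
      by case: (goodF Y FY (ex_intro _ _ Yb)) => _ _ cY; apply: cY (sub _ Xa) Yb.
    exists X; split => //.
    by case: (goodF X FX (ex_intro _ _ Xa)) => _ _ cX; apply: cX Xa (sub _ Yb).
have gA : good A.
  case: PA => // emp; exfalso.
  pose B (t : V * K) := exists w, t = (L w, g w).
  apply: (Amax B).
  - by move=> t /emp.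
  - by exists (L 0, g 0); split; [exists 0 | apply: emp].
  apply: or_intror; split.
  - by move=> w; exists w.
  - move=> v a b [w1 [-> ->]] [w2 [e ->]].
    have := kerLg ((-1) *: w2 + w1); rewrite lL e scaleN1r scaleN1r addNr => /(_ erefl).
    by rewrite -scaleN1r lg mulN1r => /eqP; rewrite addrC subr_eq0 => /eqP.
  - move=> c v w a b [w1 [-> ->]] [w2 [-> ->]]; exists (c *: w1 + w2).
    by rewrite lL lg.
case: gA => AG0 Afun Acl.
have A00 : A (0, 0) by have := AG0 0; rewrite (linm0 lL) (lin0 lg).
have Adom : forall y, exists a, A (y, a).
  move=> y; apply: NNPP => ny.
  pose B (t : V * K) := exists v a c, A (v, a) /\ t = (v + c *: y, a).
  apply: (Amax B).
  - by move=> [v a] Av; exists v, a, 0; rewrite scale0r addr0.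
  - exists (y, 0); split; last by move=> Ay; apply: ny; exists 0.
    by exists 0, 0, 1; rewrite scale1r add0r.
  apply: or_intror; split.
  - by move=> w; exists (L w), (g w), 0; rewrite scale0r addr0.
  - move=> v0 a b [v [a' [c [Av e1]]]] [v' [b' [c' [Av' e2]]]].
    case: e1 => e1 ->; case: e2 => e2 ->.
    have [cc|ncc] := eqVneq c c'.
      move: e2; rewrite e1 cc => /addIr vv.
      by apply: Afun Av _; rewrite vv.
    exfalso; apply: ny.
    have Ad : A (v' - v, b' - a').
      by have := Acl (-1) v v' a' b' Av Av'; rewrite scaleN1r mulN1r addrC [- a' + _]addrC.
    exists ((c - c')^-1 * (b' - a')).
    have := Acl ((c - c')^-1) _ _ _ _ Ad A00; rewrite !addr0.
    suff -> : (c - c')^-1 *: (v' - v) = y by [].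
    have : v' - v = (c - c') *: y.
      by rewrite scalerBl -[v'](addrK (c' *: y)) -e2 e1 addrC !addrA addNr add0r.
    move=> ->; rewrite scalerA mulVf ?scale1r //.
    by rewrite subr_eq0.
  - move=> d v0 w0 a b [v [a' [c [Av [-> ->]]]]] [w [b' [e [Aw [-> ->]]]]].
    exists (d *: v + w), (d * a' + b'), (d * c + e); split; first exact: Acl.
    congr (_, _).
    by rewrite scalerDr scalerA scalerDl -!addrA; congr (_ + _); rewrite addrCA.
pose f y := epsilon (inhabits 0) (fun a => A (y, a)).
have Af y : A (y, f y) by apply: (epsilon_spec (inhabits 0) (fun a => A (y, a))); apply: Adom.
exists f; split.
  by move=> a x y; apply: (Afun _ _ _ (Af _)); apply: Acl.
by move=> w; apply: (Afun _ _ _ (Af _)).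
Qed.


Section Basics.
Variables (V W : lmodType K).

Lemma linD (f : V -> K) x y : lin f -> f (x + y) = f x + f y.
Proof. by move=> lf; have := lf 1 x y; rewrite scale1r mul1r. Qed.
Lemma linZ (f : V -> K) a x : lin f -> f (a *: x) = a * f x.
Proof. by move=> lf; have := lf a x 0; rewrite addr0 (lin0 lf) addr0. Qed.
Lemma linN (f : V -> K) x : lin f -> f (- x) = - f x.
Proof. by move=> lf; rewrite -scaleN1r linZ // mulN1r. Qed.
Lemma linB (f : V -> K) x y : lin f -> f (x - y) = f x - f y.
Proof. by move=> lf; rewrite linD // linN. Qed.
Lemma lin_sum (f : V -> K) I (r : seq I) (P : pred I) (F : I -> V) : lin f ->
  f (\sum_(i <- r | P i) F i) = \sum_(i <- r | P i) f (F i).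
Proof.
move=> lf; elim: r => [|i r IH]; first by rewrite !big_nil lin0.
by rewrite !big_cons; case: (P i); rewrite ?linD ?IH.
Qed.

Lemma linmD (f : V -> W) x y : linm f -> f (x + y) = f x + f y.
Proof. by move=> lf; have := lf 1 x y; rewrite !scale1r. Qed.
Lemma linmZ (f : V -> W) a x : linm f -> f (a *: x) = a *: f x.
Proof. by move=> lf; have := lf a x 0; rewrite addr0 (linm0 lf) addr0. Qed.
Lemma linmN (f : V -> W) x : linm f -> f (- x) = - f x.
Proof. by move=> lf; rewrite -scaleN1r linmZ // scaleN1r. Qed.
Lemma linmB (f : V -> W) x y : linm f -> f (x - y) = f x - f y.
Proof. by move=> lf; rewrite linmD // linmN. Qed.
Lemma linm_sum (f : V -> W) I (r : seq I) (P : pred I) (F : I -> V) : linm f ->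
  f (\sum_(i <- r | P i) F i) = \sum_(i <- r | P i) f (F i).
Proof.
move=> lf; elim: r => [|i r IH]; first by rewrite !big_nil linm0.
by rewrite !big_cons; case: (P i); rewrite ?linmD ?IH.
Qed.

Lemma lin_comp (f : V -> W) (g : W -> K) : linm f -> lin g -> lin (g \o f).
Proof. by move=> lf lg a x y /=; rewrite lf lg. Qed.

Lemma linm_linear (f : {linear V -> W}) : linm f.
Proof. by move=> a x y; rewrite linearP. Qed.

End Basics.

Lemma sep (V : lmodType K) (x : V) : x != 0 -> exists f, lin f /\ f x = 1.
Proof.
move=> nx.
have h1 : linm (fun c : K^o => c *: x) by move=> a c d /=; rewrite scalerDl scalerA.
have h2 : lin (fun c : K^o => c : K) by move=> a c d.
have h3 : forall w : K^o, w *: x = 0 -> w = 0.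
  by move=> w /eqP; rewrite scaler_eq0 (negbTE nx) orbF => /eqP.
have [f [lf fx]] := ext_fun h1 h2 h3.
by exists f; split => //; have := fx 1; rewrite scale1r.
Qed.

Lemma sep_eq (V : lmodType K) (u v : V) : (forall f, lin f -> f u = f v) -> u = v.
Proof.
move=> H; apply/eqP; rewrite -subr_eq0; apply/negPn/negP => /sep [f [lf fx]].
by move: fx; rewrite linB // H // subrr => /eqP; rewrite eq_sym oner_eq0.
Qed.

Definition indep (V : lmodType K) n (u : 'I_n -> V) :=
  forall c : 'I_n -> K, \sum_i c i *: u i = 0 -> forall i, c i = 0.

Lemma duals (V : lmodType K) n (u : 'I_n -> V) : indep u ->
  exists f : 'I_n -> V -> K, (forall j, lin (f j)) /\
     forall j i, f j (u i) = (i == j)%:R.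
Proof.
move=> iu.
have ex j : exists f, lin f /\ forall i, f (u i) = (i == j)%:R.
  have h1 : linm (fun c : 'rV[K]_n => \sum_i c 0 i *: u i).
    move=> a c d; rewrite scaler_sumr -big_split /=; apply: eq_bigr => i _.
    by rewrite !mxE scalerDl scalerA.
  have h2 : lin (fun c : 'rV[K]_n => c 0 j) by move=> a c d; rewrite !mxE.
  have h3 : forall w : 'rV[K]_n, \sum_i w 0 i *: u i = 0 -> w 0 j = 0.
    by move=> w /iu; apply.
  have [f [lf fL]] := ext_fun h1 h2 h3.
  exists f; split => // i; have := fL (delta_mx 0 i).
  rewrite (bigD1 i) //= big1 ?addr0 ?mxE ?eqxx /= ?scale1r.
    by move=> ->; rewrite eq_sym.
  by move=> k ki; rewrite mxE (negbTE ki) andbF scale0r.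
pose F j := epsilon (inhabits (fun _ => 0)) (fun f => lin f /\ forall i, f (u i) = (i == j)%:R).
have FP j : lin (F j) /\ forall i, F j (u i) = (i == j)%:R.
  exact: (epsilon_spec (inhabits (fun _ => 0)) (fun f => lin f /\ forall i, f (u i) = (i == j)%:R)).
by exists F; split => [j|j i]; case: (FP j).
Qed.


Section Bil.
Variables (U V : lmodType K) (b : U -> V -> K).
Hypothesis bb : bilinear_form b.

Lemma bilDl x y z : b (x + y) z = b x z + b y z.
Proof. by case: bb => h _; have := h 1 x y z; rewrite scale1r mul1r. Qed.
Lemma bil0l z : b 0 z = 0.
Proof. by apply: (@addIr _ (b 0 z)); rewrite -bilDl !addr0 add0r. Qed.
Lemma bilZl a x z : b (a *: x) z = a * b x z.
Proof. by case: bb => h _; have := h a x 0 z; rewrite addr0 bil0l addr0. Qed.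
Lemma bilNl x z : b (- x) z = - b x z.
Proof. by rewrite -scaleN1r bilZl mulN1r. Qed.
Lemma bilDr x y z : b x (y + z) = b x y + b x z.
Proof. by case: bb => _ h; have := h 1 x y z; rewrite scale1r mul1r. Qed.
Lemma bil0r z : b z 0 = 0.
Proof. by apply: (@addIr _ (b z 0)); rewrite -bilDr !addr0 add0r. Qed.
Lemma bilZr a x z : b x (a *: z) = a * b x z.
Proof. by case: bb => _ h; have := h a x z 0; rewrite addr0 bil0r addr0. Qed.
Lemma bilNr x z : b x (- z) = - b x z.
Proof. by rewrite -scaleN1r bilZr mulN1r. Qed.
Lemma bil_suml I (r : seq I) (P : pred I) (F : I -> U) z :
  b (\sum_(i <- r | P i) F i) z = \sum_(i <- r | P i) b (F i) z.
Proof.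
elim: r => [|i r IH]; first by rewrite !big_nil bil0l.
by rewrite !big_cons; case: (P i); rewrite ?bilDl ?IH.
Qed.
Lemma bil_sumr I (r : seq I) (P : pred I) (F : I -> V) z :
  b z (\sum_(i <- r | P i) F i) = \sum_(i <- r | P i) b z (F i).
Proof.
elim: r => [|i r IH]; first by rewrite !big_nil bil0r.
by rewrite !big_cons; case: (P i); rewrite ?bilDr ?IH.
Qed.
End Bil.

Lemma bil_prod (U V : lmodType K) (f : U -> K) (g : V -> K) :
  lin f -> lin g -> bilinear_form (fun x y => f x * g y).
Proof.
move=> lf lg; split => a x y z; first by rewrite lf mulrDl mulrA.
by rewrite lg mulrDr mulrCA.
Qed.

Lemma bil_comp (U V U' V' : lmodType K) (f : U -> U') (g : V -> V') (b : U' -> V' -> K) :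
  linm f -> linm g -> bilinear_form b -> bilinear_form (fun x y => b (f x) (g y)).
Proof.
move=> lf lg [b1 b2]; split => a x y z; first by rewrite lf b1.
by rewrite lg b2.
Qed.

Lemma linm_id (U : lmodType K) : linm (@id U).
Proof. by []. Qed.

Section Teq.
Variables (U V : lmodType K).
Implicit Types s t : tens2 U V.

Lemma teq2_refl s : teq2 s s. Proof. by []. Qed.
Lemma teq2_sym s t : teq2 s t -> teq2 t s. Proof. by move=> h b bb; rewrite h. Qed.
Lemma teq2_trans s t r : teq2 s t -> teq2 t r -> teq2 s r.
Proof. by move=> h1 h2 b bb; rewrite h1 ?h2. Qed.

Lemma teq2_cat s s' t t' : teq2 s s' -> teq2 t t' -> teq2 (s ++ t) (s' ++ t').
Proof. by move=> h1 h2 b bb; rewrite !big_cat h1 ?h2. Qed.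

Lemma teq2_map (U' V' : lmodType K) (f : U -> U') (g : V -> V') s t :
  linm f -> linm g -> teq2 s t ->
  teq2 [seq (f p.1, g p.2) | p <- s] [seq (f p.1, g p.2) | p <- t].
Proof.
move=> lf lg h b bb; rewrite !big_map /=.
exact: (h (fun x y => b (f x) (g y)) (bil_comp lf lg bb)).
Qed.

Lemma contr_r (g : V -> K) s t : lin g -> teq2 s t ->
  \sum_(p <- s) g p.2 *: p.1 = \sum_(p <- t) g p.2 *: p.1.
Proof.
move=> lg h; apply: sep_eq => f lf; rewrite !lin_sum //.
have := h _ (bil_prod lf lg) => /= e.
transitivity (\sum_(p <- s) f p.1 * g p.2).
  by apply: eq_bigr => p _; rewrite linZ // mulrC.
by rewrite e; apply: eq_bigr => p _; rewrite linZ // mulrC.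
Qed.

Lemma contr_l (g : U -> K) s t : lin g -> teq2 s t ->
  \sum_(p <- s) g p.1 *: p.2 = \sum_(p <- t) g p.1 *: p.2.
Proof.
move=> lg h; apply: sep_eq => f lf; rewrite !lin_sum //.
have := h _ (bil_prod lg lf) => /= e.
transitivity (\sum_(p <- s) g p.1 * f p.2).
  by apply: eq_bigr => p _; rewrite linZ.
by rewrite e; apply: eq_bigr => p _; rewrite linZ.
Qed.

End Teq.

Definition swap2 (U V : lmodType K) (s : tens2 U V) : tens2 V U :=
  [seq (p.2, p.1) | p <- s].

Lemma teq2_swap (U V : lmodType K) (s t : tens2 U V) :
  teq2 s t -> teq2 (swap2 s) (swap2 t).
Proof.
move=> h b [b1 b2]; rewrite !big_map /=.
by apply: (h (fun x y => b y x)); split => *; rewrite ?b1 ?b2.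
Qed.

Lemma swap2K (U V : lmodType K) (s : tens2 U V) : swap2 (swap2 s) = s.
Proof. by rewrite /swap2 -map_comp map_id_in //; case. Qed.

Definition fam (U V : lmodType K) n (u : 'I_n -> U) (v : 'I_n -> V) : tens2 U V :=
  [seq (u i, v i) | i <- enum 'I_n].

Lemma sum_fam (U V : lmodType K) n (u : 'I_n -> U) (v : 'I_n -> V) (R : nmodType) (F : U * V -> R) :
  \sum_(p <- fam u v) F p = \sum_i F (u i, v i).
Proof. by rewrite big_map big_enum. Qed.

Lemma swap_fam (U V : lmodType K) n (u : 'I_n -> U) (v : 'I_n -> V) :
  swap2 (fam u v) = fam v u.
Proof. by rewrite /swap2 /fam -map_comp. Qed.


Lemma reduce_l (U V : lmodType K) n (u : 'I_n -> U) (v : 'I_n -> V) :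
  ~ indep u -> exists s' : tens2 U V, (size s' < n)%N /\ teq2 (fam u v) s'.
Proof.
move=> ni.
have [c [c0 [k ck]]] : exists c : 'I_n -> K, \sum_i c i *: u i = 0 /\ exists k, c k != 0.
  apply: NNPP => H; apply: ni => c e i; apply: NNPP => nc; apply: H.
  by exists c; split => //; exists i; apply/eqP.
exists [seq (u i, v i - ((c k)^-1 * c i) *: v k) | i <- enum 'I_n & i != k].
split.
  rewrite size_map size_filter.
  have := count_predC (pred1 k) (enum 'I_n).
  rewrite (count_uniq_mem _ (enum_uniq _)) mem_enum /= => e.
  rewrite -[X in (_ < X)%N](size_enum_ord n) -e add1n ltnS.
  by apply: eq_leq; apply: eq_count => i.
move=> b bb; rewrite sum_fam big_map big_filter big_enum_cond /=.
have e1 : \sum_(i | i != k) c i *: u i = - (c k *: u k).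
  by move: c0; rewrite (bigD1 k) //= => /eqP; rewrite addrC addr_eq0 => /eqP.
transitivity (\sum_(i | i != k) b (u i) (v i) - b ((c k)^-1 *: \sum_(i | i != k) c i *: u i) (v k)).
  rewrite e1 scalerN scalerA mulVf // scale1r bilNl // opprK addrC.
  by rewrite (bigD1 k).
rewrite scaler_sumr bil_suml // -sumrB; apply: eq_bigr => i _.
by rewrite bilDr // bilNr // bilZr // scalerA bilZl.
Qed.

Lemma reduce_r (U V : lmodType K) n (u : 'I_n -> U) (v : 'I_n -> V) :
  ~ indep v -> exists s' : tens2 U V, (size s' < n)%N /\ teq2 (fam u v) s'.
Proof.
move=> /(@reduce_l V U n v u) [s' [ss' h]]; exists (swap2 s'); split.
  by rewrite size_map.
by rewrite -(swap2K (fam u v)); apply: teq2_swap; rewrite swap_fam.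
Qed.

Lemma minrep (U V : lmodType K) (s : tens2 U V) :
  exists n (u : 'I_n -> U) (v : 'I_n -> V), [/\ indep u, indep v & teq2 s (fam u v)].
Proof.
move: {2}(size s) (leqnn (size s)) => m; elim: m s => [|m IH] s.
  rewrite leqn0 => /nilP ->; exists 0, (fun _ => 0), (fun _ => 0).
  split; try by move=> c _; case.
  by move=> b bb; rewrite sum_fam big_ord0 big_nil.
move=> sm.
pose u (i : 'I_(size s)) := (nth (0, 0) s i).1.
pose v (i : 'I_(size s)) := (nth (0, 0) s i).2.
have es : teq2 s (fam u v).
  move=> b bb; rewrite sum_fam (big_nth (0, 0)) big_mkord.
  by apply: eq_bigr.
have [iu|niu] := classic (indep u); last first.
  have [s' [ss' h]] := reduce_l v niu.
  have : (size s' < m.+1)%N by apply: leq_trans ss' sm.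
  move=> /IH [n [u' [v' [? ? h']]]]; exists n, u', v'; split => //.
  by apply: teq2_trans es (teq2_trans h h').
have [iv|niv] := classic (indep v); last first.
  have [s' [ss' h]] := reduce_r u niv.
  have : (size s' < m.+1)%N by apply: leq_trans ss' sm.
  move=> /IH [n [u' [v' [? ? h']]]]; exists n, u', v'; split => //.
  by apply: teq2_trans es (teq2_trans h h').
by exists (size s), u, v.
Qed.


Lemma sum_deltal n (k : 'I_n) (F : 'I_n -> K) : \sum_i (i == k)%:R * F i = F k.
Proof.
rewrite (bigD1 k) //= eqxx mul1r big1 ?addr0 // => i /negbTE ->; by rewrite mul0r.
Qed.
Lemma sum_deltar n (k : 'I_n) (F : 'I_n -> K) : \sum_i (k == i)%:R * F i = F k.
Proof. by under eq_bigr do rewrite eq_sym; apply: sum_deltal. Qed.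

Section Tri.
Variables (U V W : lmodType K) (t : U -> V -> W -> K).
Hypothesis tt : trilinear_form t.
Lemma tri12 z : bilinear_form (fun x y => t x y z).
Proof. by case: tt => h1 h2 _; split => *; rewrite ?h1 ?h2. Qed.
Lemma tri13 y : bilinear_form (fun x z => t x y z).
Proof. by case: tt => h1 _ h3; split => *; rewrite ?h1 ?h3. Qed.
Lemma tri23 x : bilinear_form (fun y z => t x y z).
Proof. by case: tt => _ h2 h3; split => *; rewrite ?h2 ?h3. Qed.
End Tri.

Lemma tri_prod_l (U V W : lmodType K) (f : U -> K) (b : V -> W -> K) :
  lin f -> bilinear_form b -> trilinear_form (fun x y z => f x * b y z).
Proof.
move=> lf [b1 b2]; split => *; first by rewrite lf mulrDl mulrA.
  by rewrite b1 mulrDr mulrCA.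
by rewrite b2 mulrDr mulrCA.
Qed.

Lemma tri_prod_r (U V W : lmodType K) (b : U -> V -> K) (f : W -> K) :
  bilinear_form b -> lin f -> trilinear_form (fun x y z => b x y * f z).
Proof.
move=> [b1 b2] lf; split => *; first by rewrite b1 mulrDl mulrA.
  by rewrite b2 mulrDl mulrA.
by rewrite lf mulrDr mulrCA.
Qed.

Lemma lin_sum_fun (V : lmodType K) I (r : seq I) (F : I -> V -> K) :
  (forall i, lin (F i)) -> lin (fun x => \sum_(i <- r) F i x).
Proof.
move=> lF a x y; rewrite mulr_sumr -big_split /=; apply: eq_bigr => i _; exact: lF.
Qed.

Lemma lin_scale (V : lmodType K) (f : V -> K) (c : K) : lin f -> lin (fun x => c * f x).
Proof. by move=> lf a x y; rewrite lf mulrDr mulrCA. Qed.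

Section Coalg.
Variable H : wbdata K.
Hypothesis hH : is_wba H.

Lemma cm_sum_lin (b : H -> H -> K) : bilinear_form b ->
  lin (fun x => \sum_(q <- wb_cm x) b q.1 q.2).
Proof.
move=> bb a x y; rewrite (wba_cm_lin hH a x y bb) big_cat big_map /= mulr_sumr.
by congr (_ + _); apply: eq_bigr => p _; rewrite bilZl.
Qed.

Lemma cm_contr_lin (g : H -> K) : lin g ->
  linm (fun y : H => \sum_(q <- wb_cm y) g q.2 *: q.1).
Proof.
move=> lg a x y; rewrite (contr_r lg (wba_cm_lin hH a x y)) big_cat big_map /=.
by rewrite scaler_sumr; congr (_ + _); apply: eq_bigr => p _; rewrite scalerA mulrC -scalerA.
Qed.

Lemma eps_lin : lin (@wb_eps K H).
Proof. exact: wba_eps_lin hH. Qed.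

Lemma coassoc_sum (x : H) (T : H -> H -> H -> K) : trilinear_form T ->
  \sum_(p <- wb_cm x) \sum_(q <- wb_cm p.1) T q.1 q.2 p.2 =
  \sum_(p <- wb_cm x) \sum_(q <- wb_cm p.2) T p.1 q.1 q.2.
Proof.
move=> tT; have := wba_coassoc hH x tT.
by rewrite !big_allpairs_dep.
Qed.

End Coalg.


Lemma mk_bil (U V : lmodType K) (B : U -> V -> K) :
  (forall z, lin (fun x => B x z)) -> (forall x, lin (B x)) -> bilinear_form B.
Proof. by move=> h1 h2; split => *; [apply: h1 | apply: h2]. Qed.

Lemma bil_linl (U V : lmodType K) (b : U -> V -> K) z : bilinear_form b -> lin (fun x => b x z).
Proof. by case=> h _ a x y; apply: h. Qed.
Lemma bil_linr (U V : lmodType K) (b : U -> V -> K) x : bilinear_form b -> lin (b x).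
Proof. by case=> _ h a y z; apply: h. Qed.

Lemma sum_delta_row n (i : 'I_n) (V : lmodType K) (F : 'I_n -> V) :
  \sum_m (delta_mx 0 i : 'rV[K]_n) 0 m *: F m = F i.
Proof.
rewrite (bigD1 i) //= mxE !eqxx scale1r big1 ?addr0 // => m hm.
rewrite mxE eqxx /=; suff -> : (m == i) = false by rewrite scale0r.
exact: negbTE.
Qed.

Lemma comod_of (H : wbdata K) (hH : is_wba H) (h : H) :
  exists (X : preco H) (iota : X -> H) (xh : X),
  [/\ is_comod X, linm iota,
      (forall x, teq2 (wb_cm (iota x)) [seq (iota p.1, p.2) | p <- @pc_co _ _ X x]),
      (forall x, \sum_(p <- @pc_co _ _ X x) wb_eps (iota p.1) *: p.2 = iota x) &
      h = iota xh].
Proof.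
have [n [u [v [iu iv e]]]] := minrep (wb_cm h).
have [f [lf fu]] := duals iu.
have [g [lg gv]] := duals iv.
pose D j (y : H) := \sum_(q <- wb_cm y) g j q.2 *: q.1.
pose d i j := D j (v i).
have le := eps_lin hH.
have D1 j : teq2 (wb_cm (u j)) (fam u (fun i => d i j)).
  move=> b bb.
  have L1 : \sum_(p <- wb_cm h) \sum_(q <- wb_cm p.1) b q.1 q.2 * g j p.2
            = \sum_(q <- wb_cm (u j)) b q.1 q.2.
    transitivity (\sum_(p <- wb_cm h) (\sum_(q <- wb_cm p.1) b q.1 q.2) * g j p.2).
      by apply: eq_bigr => p _; rewrite mulr_suml.
    rewrite (e _ (bil_prod (cm_sum_lin hH bb) (lg j))) sum_fam /=.
    under eq_bigr do rewrite gv mulrC.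
    by rewrite sum_deltal.
  have L2 : \sum_(p <- wb_cm h) \sum_(q <- wb_cm p.2) b p.1 q.1 * g j q.2
            = \sum_i b (u i) (d i j).
    transitivity (\sum_(p <- wb_cm h) b p.1 (D j p.2)).
      apply: eq_bigr => p _; rewrite bil_sumr //; apply: eq_bigr => q _.
      by rewrite bilZr // mulrC.
    by rewrite (e _ (bil_comp (@linm_id _) (cm_contr_lin hH (lg j)) bb)) sum_fam.
  by rewrite sum_fam -L1 (coassoc_sum hH h (tri_prod_r bb (lg j))) L2.
have D2 k j : wb_eps (d k j) = (k == j)%:R.
  have := wba_counitr hH (u j) => /(congr1 (f k)).
  rewrite lin_sum // fu.
  under eq_bigr do rewrite linZ // mulrC.
  rewrite (D1 j _ (bil_prod (lf k) le)) sum_fam /=.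
  under eq_bigr do rewrite fu.
  by rewrite sum_deltal eq_sym.
have D3 k j : teq2 (wb_cm (d k j)) (fam (fun i => d k i) (fun i => d i j)).
  move=> b bb.
  pose B1 x z := \sum_(q <- wb_cm x) f k q.1 * b q.2 z.
  have bB1 : bilinear_form B1.
    apply: mk_bil => [z|x].
      exact: (cm_sum_lin hH (bil_prod (lf k) (bil_linl z bb))).
    apply: lin_sum_fun => q; apply: lin_scale; exact: bil_linr.
  have L1 : \sum_(p <- wb_cm (u j)) \sum_(q <- wb_cm p.1) f k q.1 * b q.2 p.2
            = \sum_i b (d k i) (d i j).
    rewrite (D1 j _ bB1) sum_fam /=; apply: eq_bigr => i _.
    rewrite /B1 (D1 i _ (bil_prod (lf k) (bil_linl (d i j) bb))) sum_fam /=.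
    under eq_bigr do rewrite fu.
    by rewrite sum_deltal.
  have L2 : \sum_(p <- wb_cm (u j)) \sum_(q <- wb_cm p.2) f k p.1 * b q.1 q.2
            = \sum_(q <- wb_cm (d k j)) b q.1 q.2.
    transitivity (\sum_(p <- wb_cm (u j)) f k p.1 * \sum_(q <- wb_cm p.2) b q.1 q.2).
      by apply: eq_bigr => p _; rewrite mulr_sumr.
    rewrite (D1 j _ (bil_prod (lf k) (cm_sum_lin hH bb))) sum_fam /=.
    under eq_bigr do rewrite fu.
    by rewrite sum_deltal.
  by rewrite sum_fam -L2 -(coassoc_sum hH (u j) (tri_prod_l (lf k) bb)) L1.
pose rho (x : 'rV[K]_n) : tens2 'rV[K]_n H :=
  fam (fun i => delta_mx 0 i : 'rV[K]_n) (fun i => \sum_j x 0 j *: d i j).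
pose X := @PreCo K H 'rV[K]_n rho.
pose iota (x : 'rV[K]_n) : H := \sum_j x 0 j *: u j.
have liota : linm iota.
  move=> a x y; rewrite /iota scaler_sumr -big_split /=; apply: eq_bigr => j _.
  by rewrite !mxE scalerDl scalerA.
have iota_e i : iota (delta_mx 0 i) = u i by rewrite /iota sum_delta_row.
have E j : \sum_i wb_eps (u i) *: d i j = u j.
  by rewrite -[RHS](wba_counitl hH (u j)) (contr_l le (D1 j)) sum_fam.
exists X, iota, (\row_i wb_eps (v i)); split.
- split.
  + move=> a x y b bb; rewrite /= big_cat big_map !sum_fam /= -big_split /=.
    apply: eq_bigr => i _; rewrite bilZl // -bilZr // -bilDr //; congr (b _ _).
    rewrite scaler_sumr -big_split; apply: eq_bigr => j _.
    by rewrite !mxE scalerDl scalerA.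
  + move=> x T tT; rewrite !big_allpairs_dep /= !sum_fam /=.
    under eq_bigr do rewrite sum_fam /=.
    transitivity (\sum_i \sum_l \sum_j x 0 j * T 'e_l (d l i) (d i j)).
      apply: eq_bigr => i _; apply: eq_bigr => l _; rewrite sum_delta_row.
      rewrite (lin_sum _ _ _ (bil_linr (d l i) (tri23 tT 'e_l))).
      by apply: eq_bigr => j _; rewrite linZ //; apply: bil_linr; apply: tri23.
    rewrite exchange_big /=; apply: eq_bigr => i _.
    have lF := cm_sum_lin hH (tri23 tT 'e_i).
    rewrite (lin_sum _ _ _ lF) exchange_big /=; apply: eq_bigr => j _.
    have /= -> := linZ (x 0 j) (d i j) lF.
    rewrite (D3 i j _ (tri23 tT _)) sum_fam mulr_sumr.
    by apply: eq_bigr => l _.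
  + move=> x; rewrite /= sum_fam /= [RHS]row_sum_delta; apply: eq_bigr => i _.
    congr (_ *: _); rewrite lin_sum //.
    under eq_bigr do rewrite linZ // D2 mulrC.
    by rewrite sum_deltar.
- exact: liota.
- move=> x b bb; rewrite big_map sum_fam /=.
  have lF := cm_sum_lin hH bb.
  transitivity (\sum_j x 0 j * \sum_i b (u i) (d i j)).
    rewrite /iota (lin_sum _ _ _ lF); apply: eq_bigr => j _.
    by have /= -> := linZ (x 0 j) (u j) lF; rewrite (D1 j _ bb) sum_fam.
  symmetry; transitivity (\sum_i \sum_j x 0 j * b (u i) (d i j)).
    apply: eq_bigr => i _; rewrite iota_e bil_sumr //; apply: eq_bigr => j _.
    by rewrite bilZr.
  by rewrite exchange_big; apply: eq_bigr => j _; rewrite mulr_sumr.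
- move=> x; rewrite /= sum_fam /=.
  transitivity (\sum_i \sum_j (wb_eps (u i) * x 0 j) *: d i j).
    apply: eq_bigr => i _; rewrite iota_e scaler_sumr; apply: eq_bigr => j _.
    by rewrite scalerA.
  rewrite /iota exchange_big /=; apply: eq_bigr => j _.
  by rewrite -E scaler_sumr; apply: eq_bigr => i _; rewrite scalerA mulrC.
- rewrite -[LHS](wba_counitr hH h) (contr_r le e) sum_fam /iota.
  by apply: eq_bigr => i _; rewrite mxE.
Qed.


Lemma vspace_of_pred (V : vectType K) (P : V -> Prop) :
  P 0 -> (forall a x y, P x -> P y -> P (a *: x + y)) ->
  exists U : {vspace V}, forall x, x \in U <-> P x.
Proof.
move=> P0 Pcl.
have P_U (U : {vspace V}) : (forall x, x \in U -> P x) -> forall x c, x \in U -> P (c *: x).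
  by move=> hU x c /hU Px; have := Pcl c x 0 Px P0; rewrite addr0.
apply: NNPP => H.
have claim k : exists U : {vspace V}, (forall x, x \in U -> P x) /\ (k <= \dim U)%N.
  elim: k => [|k [U [hU kU]]].
    by exists 0%VS; split => // x; rewrite memv0 => /eqP ->.
  have [x [Px nxU]] : exists x, P x /\ x \notin U.
    apply: NNPP => nx; apply: H; exists U => x; split; first exact: hU.
    by move=> Px; apply: NNPP => nxU; apply: nx; exists x; split => //; apply/negP.
  exists (U + <[x]>)%VS; split.
    move=> y /memv_addP [w wU [z /vlineP [c ->] ->]].
    by rewrite addrC; apply: Pcl => //; apply: hU.
  rewrite ltnNge; apply/negP => le.
  have : (U == U + <[x]>)%VS by rewrite eqEdim addvSl /= (leq_trans le kU).
  move=> /eqP eU; move/negP: nxU; apply; rewrite eU.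
  apply/memv_addP; exists 0; first exact: mem0v.
  by exists x; [exact: memv_line | rewrite add0r].
have [U [_ hU]] := claim (\dim (@fullv K V)).+1.
by move: hU; rewrite ltnNge dimvS // subvf.
Qed.


Lemma lfun_linm (U V : vectType K) (f : 'Hom(U, V)) : linm f.
Proof. by move=> a x y; rewrite linearP. Qed.

Lemma linm_comp (U V W : lmodType K) (f : U -> V) (g : V -> W) :
  linm f -> linm g -> linm (fun x => g (f x)).
Proof. by move=> lf lg a x y; rewrite lf lg. Qed.

Lemma vsval_proj (V : vectType K) (U : {vspace V}) v : vsval (vsproj U v) = projv U v.
Proof. by rewrite /vsproj unlock. Qed.

Lemma cm0 (H : wbdata K) (hH : is_wba H) (b : H -> H -> K) : bilinear_form b ->
  \sum_(q <- wb_cm (0 : H)) b q.1 q.2 = 0.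
Proof. by move=> bb; have := lin0 (cm_sum_lin hH bb). Qed.

Lemma comod_sum_lin (H : wbdata K) (X : preco H) (b : X -> H -> K) :
  is_comod X -> bilinear_form b ->
  lin (fun x => \sum_(p <- @pc_co _ _ X x) b p.1 p.2).
Proof.
move=> cX bb a x y; rewrite (co_lin cX a x y bb) big_cat big_map /= mulr_sumr.
by congr (_ + _); apply: eq_bigr => p _; rewrite (bilZl bb).
Qed.

Section Main.
Variables (A B : wbdata K) (hA : is_wba A) (hB : is_wba B)
  (Fco : forall X : preco A, X -> tens2 X B)
  (phiF : forall X Y : preco A,
     'Hom(Fobj Fco (bobj X Y), bobj (Fobj Fco X) (Fobj Fco Y)))
  (omF : 'Hom(Fobj Fco (u_obj (unitobj A)), u_obj (unitobj B)))
  (hF : strong_comonoidal_over_forget phiF omF)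
  (hEq : is_equivalence Fco)
  (phi : A -> B) (hphi : is_wbamap phi) (hM : eq_Mphi phiF omF phi).

Lemma phi_lin : linm phi.
Proof. exact: wbm_lin hphi. Qed.

Lemma FcoE (X : preco A) : is_comod X ->
  forall x, teq2 (@Fco X x) [seq (p.1, phi p.2) | p <- @pc_co _ _ X x].
Proof. by case: hM => h _ _; apply: h. Qed.

Lemma phi_surj y : exists x, phi x = y.
Proof.
have [Z [iota [z [cZ li icm key ->]]]] := comod_of hB y.
case: hEq => _ ess.
have [X [cX [f [g [cf cg fg gf]]]]] := ess Z cZ.
have e1 := cg z.
have e2 := FcoE cX (g z).
pose lam (x : X) := wb_eps (iota (f x)).
have llam : lin lam.
  apply: (lin_comp (f := fun x => iota (f x))) (eps_lin hB).
  exact: linm_comp (lfun_linm f) li.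
have := contr_l llam (teq2_trans (teq2_sym e1) e2).
rewrite !big_map /= => E.
exists (\sum_(p <- @pc_co _ _ X (g z)) lam p.1 *: p.2).
rewrite (linm_sum _ _ _ phi_lin).
under eq_bigr do rewrite (linmZ _ _ phi_lin).
rewrite -E -[RHS]key; apply: eq_bigr => p _.
by rewrite /lam gf.
Qed.


Lemma phi_inj0 a : phi a = 0 -> a = 0.
Proof.
move=> pa0.
have [X [iota [xa [cX li icm key ea]]]] := comod_of hA a.
have cFX := F_obj hF cX.
have lpi : linm (fun x => phi (iota x)) := linm_comp li phi_lin.
pose P (x : X) := phi (iota x) = 0.
have [U hU] : exists U : {vspace X}, forall x, x \in U <-> P x.
  apply: vspace_of_pred; first by rewrite /P (linm0 lpi).
  by move=> c x y; rewrite /P => px py; rewrite (lpi c x y) px py scaler0 addr0.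
pose pi := projv U.
(* the kernel is a B-subcomodule *)
have zeroB : forall x, x \in U -> forall b' : B -> B -> K, bilinear_form b' ->
    \sum_(p <- @pc_co _ _ X x) b' (phi (iota p.1)) (phi p.2) = 0.
  move=> x /hU xU b' bb'.
  have e1 := wbm_cm hphi (iota x).
  have e2 := teq2_map phi_lin phi_lin (icm x).
  transitivity (\sum_(q <- wb_cm (phi (iota x))) b' q.1 q.2).
    by rewrite (e1 _ bb') (e2 _ bb') !big_map.
  by rewrite xU cm0.
have sub : forall x, x \in U ->
    teq2 (@Fco X x) [seq (pi p.1, p.2) | p <- @Fco X x].
  move=> x xU b bb.
  have S1 := FcoE cX x.
  have /= S2 := S1 _ (bil_comp (lfun_linm pi) (@linm_id _) bb).
  rewrite big_map /= S2 (S1 b bb) !big_map /=.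
  pose m := \dim (@fullv K X).
  pose e := vbasis (@fullv K X).
  have ex k : exists c, lin c /\ forall w : X,
      c (phi (iota w)) = coord e k (w - pi w).
    have h2 : lin (fun w : X => coord e k (w - pi w)).
      move=> c w1 w2; rewrite (lfun_linm pi) !linearP /=.
      have -> : c * coord e k (w1 - pi w1) + coord e k (w2 - pi w2) = coord e k (c *: (w1 - pi w1) + (w2 - pi w2)) by rewrite linearP.
      by rewrite scalerBr scalerN addrACA.
    have h3 : forall w : X, phi (iota w) = 0 -> coord e k (w - pi w) = 0.
      move=> w /hU wU; rewrite /pi projv_id // subrr.
      by rewrite linear0.
    by have [c [lc hc]] := ext_fun lpi h2 h3; exists c.
  pose c k := epsilon (inhabits (fun _ => 0)) (fun c => lin c /\ forall w : X,
      c (phi (iota w)) = coord e k (w - pi w)).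
  have cP k : lin (c k) /\ forall w : X, c k (phi (iota w)) = coord e k (w - pi w).
    exact: (epsilon_spec (inhabits (fun _ => 0)) (fun c => lin c /\ forall w : X,
      c (phi (iota w)) = coord e k (w - pi w)) (ex k)).
  apply/eqP; rewrite -subr_eq0 -sumrB; apply/eqP.
  transitivity (\sum_(p <- @pc_co _ _ X x) \sum_(k < m)
      c k (phi (iota p.1)) * b e`_k (phi p.2)).
    apply: eq_bigr => p _; rewrite -(bilNl bb) -(bilDl bb).
    rewrite {1}(coord_vbasis (memvf (p.1 - pi p.1))) (bil_suml bb).
    apply: eq_bigr => k _; rewrite (bilZl bb); congr (_ * _).
    by case: (cP k) => _ ->.
  rewrite exchange_big /= big1 // => k _.
  case: (cP k) => lck _.
  exact: (zeroB x xU _ (bil_prod lck (bil_linr _ (bil_comp (@linm_id _) (@linm_id _) bb)))).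
pose rhoZ (z : subvs_of U) : tens2 (subvs_of U) B :=
  [seq (vsproj U p.1, p.2) | p <- @Fco X (vsval z)].
pose Z := @PreCo K B (subvs_of U) rhoZ.
have lproj : linm (vsproj U) by move=> *; rewrite linearP.
have lval : linm (@vsval _ _ U) by move=> *; rewrite linearP.
have cval : forall z : subvs_of U,
    teq2 (@Fco X (vsval z)) [seq (vsval p.1, p.2) | p <- rhoZ z].
  move=> z; rewrite /rhoZ -map_comp /=.
  have -> : [seq ((@vsval _ _ U \o vsproj U) p.1, p.2) | p <- @Fco X (vsval z)] =
            [seq (pi p.1, p.2) | p <- @Fco X (vsval z)].
    by apply: eq_map => p /=; rewrite vsval_proj.
  by apply: sub; apply: subvsP.
have cZ : is_comod Z.
  split.
  - move=> c z1 z2 b bb; rewrite /= /rhoZ big_cat !big_map /=.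
    have := co_lin cFX c (vsval z1) (vsval z2) (bil_comp lproj (@linm_id _) bb).
    rewrite big_cat !big_map /= -(lval c z1 z2) => ->.
    by congr (_ + _); apply: eq_bigr => p _; rewrite (linmZ _ _ lproj).
  - move=> z T tT; rewrite /= !big_allpairs_dep /= /rhoZ !big_map /=.
    pose S0 (y : X) (w : B) := \sum_(r <- @Fco X y) T (vsproj U r.1) r.2 w.
    have tT' : trilinear_form (fun x y w => T (vsproj U x) y w).
      by case: tT => t1 t2 t3; split => *; rewrite ?lproj ?t1 ?t2 ?t3.
    have bS0 : bilinear_form S0.
      apply: mk_bil => [w|y].
        exact: (comod_sum_lin cFX (tri12 tT' w)).
      by apply: lin_sum_fun => r; case: tT => _ _ t3 c w1 w2; apply: t3.
    transitivity (\sum_(j <- @Fco X (vsval z)) S0 (pi j.1) j.2).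
      by apply: eq_bigr => j _; rewrite big_map /S0 vsval_proj.
    have := sub _ (subvsP z) _ bS0; rewrite big_map /= => <-.
    have := co_coassoc cFX (vsval z) tT'; rewrite !big_allpairs_dep /= => ->.
    by [].
  - move=> z; rewrite /= /rhoZ big_map /=.
    transitivity (vsproj U (\sum_(p <- @Fco X (vsval z)) wb_eps p.2 *: p.1)).
      by rewrite (linm_sum _ _ _ lproj); apply: eq_bigr => p _; rewrite (linmZ _ _ lproj).
    by have /= -> := co_counit cFX (vsval z); rewrite vsvalK.
case: hEq => full ess.
have [Y [cY [f [g [cf cg fg gf]]]]] := ess Z cZ.
pose hf : 'Hom(Y, X) := (linfun (@vsval _ _ U) \o f)%VF.
have hfE y : hf y = vsval (f y) by rewrite comp_lfunE lfunE.
have cmB : @is_cmap K B (Fobj Fco Y) (Fobj Fco X) hf.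
  move=> y; rewrite /= hfE.
  apply: teq2_trans (cval (f y)) _.
  have := teq2_map lval (@linm_id _) (cf y); rewrite -map_comp /=.
  move=> h; apply: teq2_trans h _.
  suff -> : [seq (hf p.1, p.2) | p <- @Fco Y y] =
     [seq (vsval p.1, p.2) | p <- [seq (f p.1, p.2) | p <- @Fco Y y]] by [].
  by rewrite -map_comp; apply: eq_map => p /=; rewrite hfE.
have cmA := full Y X hf cY cX cmB.
have lei : lin (fun x : X => wb_eps (iota x)) := lin_comp li (eps_lin hA).
have zero : forall x, x \in U -> iota x = 0.
  move=> x xU.
  have hy : hf (g (vsproj U x)) = x by rewrite hfE gf vsprojK.
  rewrite -(wba_counitl hA (iota x)) (contr_l (eps_lin hA) (icm x)) big_map /=.
  rewrite -{1}hy (contr_l lei (cmA _)) big_map /= big1 // => p _.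
  have : hf p.1 \in U by rewrite hfE subvsP.
  move/hU; rewrite /P => ep.
  by rewrite -(wbm_eps hphi) ep (lin0 (eps_lin hB)) scale0r.
rewrite ea; apply: zero; apply/hU; by rewrite /P -ea.
Qed.


Lemma phi_inj : injective phi.
Proof.
move=> x y e; apply/eqP; rewrite -subr_eq0; apply/eqP; apply: phi_inj0.
by rewrite (linmB _ _ phi_lin) e subrr.
Qed.

Lemma main_iso : is_wba_iso phi.
Proof.
split => //.
pose g y := epsilon (inhabits 0) (fun x => phi x = y).
have gK : cancel g phi.
  move=> y; exact: (epsilon_spec (inhabits 0) (fun x => phi x = y) (phi_surj y)).
have Kg : cancel phi g by move=> x; apply: phi_inj; rewrite gK.
exists g; split => //.
have lg : linm g.
  by move=> a x y; apply: phi_inj; rewrite phi_lin !gK.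
split.
- exact: lg.
- by move=> x y; apply: phi_inj; rewrite (wbm_mul hphi) !gK.
- by apply: phi_inj; rewrite (wbm_one hphi) gK.
- move=> y b bb.
  have bb' := bil_comp lg lg bb.
  have e := wbm_cm hphi (g y); rewrite gK in e.
  have /= e2 := e _ bb'.
  rewrite big_map /= e2 big_map /=; by apply: eq_bigr => p _; rewrite !Kg.
- by move=> y; rewrite -(wbm_eps hphi) gK.
Qed.

End Main.

End Lin.

Unset Implicit Arguments.
Theorem corollary3p6 (K : fieldType) (A B : wbdata K)
  (hA : is_wba A) (hB : is_wba B)
  (Fco : forall X : preco A, X -> tens2 X B)
  (phiF : forall X Y : preco A,
     'Hom(Fobj Fco (bobj X Y), bobj (Fobj Fco X) (Fobj Fco Y)))
  (omF : 'Hom(Fobj Fco (u_obj (unitobj A)), u_obj (unitobj B)))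
  (hF : strong_comonoidal_over_forget phiF omF)
  (hEq : is_equivalence Fco) :
  forall phi : A -> B, is_wbamap phi -> eq_Mphi phiF omF phi ->
  is_wba_iso phi.
Proof.
move=> phi hphi hM.
exact: (main_iso hA hB hF hEq hphi hM).
Qed.
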